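(* Let $k\ge2$, $d=2^k+1$, and let $f(x)=x^d+g(x)$ with $g(x)=\sum_{j=0}^{2^{k-1}+1}a_jx^j\in\mathbb{F}_q[x]$. Suppose there is an index $j$ with $a_j\neq0$ such that $\phi_j(x,y,z)$ is nonzero and relatively prime to $\phi_d(x,y,z)$ in $\overline{\mathbb{F}_q}[x,y,z]$. Then $\phi(x,y,z)$ is absolutely irreducible.
   Context: Let $q=2^m$. For an integer $j\ge0$ let $\phi_j(x,y,z)=\dfrac{x^j+y^j+z^j+(x+y+z)^j}{(x+y)(x+z)(y+z)}$, a homogeneous polynomial of degree $j-3$ over $\mathbb{F}_2$. For $f\in\mathbb{F}_q[x]$ let $\phi(x,y,z)=\dfrac{f(x)+f(y)+f(z)+f(x+y+z)}{(x+y)(x+z)(y+z)}\in\mathbb{F}_q[x,y,z]$. Absolutely irreducible means irreducible (and nonconstant) over $\overline{\mathbb{F}_q}$. *)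

(* Defs.v *)
From HB Require Import structures.
From mathcomp Require Import all_boot all_order all_algebra all_field.
Set Implicit Arguments. Unset Strict Implicit. Unset Printing Implicit Defensive.
Import GRing.Theory.
Local Open Scope ring_scope.

(* Trivariate polynomials over K: K[x][y][z], i.e. {poly {poly {poly K}}}.
   Variable z is the outermost 'X, y is 'X%:P, x is 'X%:P%:P. *)
Definition poly3 (K : nzRingType) := {poly {poly {poly K}}}.

Definition PX {K : nzRingType} : poly3 K := ('X%:P)%:P.
Definition PY {K : nzRingType} : poly3 K := 'X%:P.
Definition PZ {K : nzRingType} : poly3 K := 'X.

Definition C3 {K : nzRingType} (c : K) : poly3 K := c%:P%:P%:P.

Definition const3 {K : nzRingType} (p : poly3 K) : Prop := exists c : K, p = C3 c.

Definition dvd3 {K : comNzRingType} (r p : poly3 K) : Prop := exists c : poly3 K, p = c * r.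

Definition irreducible3 {K : comNzRingType} (p : poly3 K) : Prop :=
  ~ const3 p /\ forall a b : poly3 K, p = a * b -> const3 a \/ const3 b.

Definition relprime3 {K : comNzRingType} (p q : poly3 K) : Prop :=
  forall r : poly3 K, dvd3 r p -> dvd3 r q -> const3 r.

Definition eval3 {K : comNzRingType} (f : {poly K}) (t : poly3 K) : poly3 K :=
  (map_poly (@C3 K) f).[t].

Definition numj {K : comNzRingType} (j : nat) : poly3 K :=
  PX ^+ j + PY ^+ j + PZ ^+ j + (PX + PY + PZ) ^+ j.

Definition numf {K : comNzRingType} (f : {poly K}) : poly3 K :=
  eval3 f PX + eval3 f PY + eval3 f PZ + eval3 f (PX + PY + PZ).

Definition den3 {K : comNzRingType} : poly3 K :=
  (PX + PY) * (PX + PZ) * (PY + PZ).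

(* Main.v *)
Require Import Defs.
From HB Require Import structures.
From mathcomp Require Import all_boot all_order all_algebra all_field.
From Stdlib Require Import Lia.
Import GRing.Theory.
Set Implicit Arguments. Unset Strict Implicit.
Local Open Scope ring_scope.
Section S.
Variables (B C : comNzRingType) (f : {rmorphism B -> {poly C}}) (w : C).
Definition ext (p : {poly B}) : {poly C} := (map_poly f p).[ 'X * w%:P ].
Lemma ext_zmod : zmod_morphism ext.
Proof. by move=> p q; rewrite /ext rmorphB hornerD hornerN. Qed.
Lemma ext_monoid : monoid_morphism ext.
Proof. split; first by rewrite /ext rmorph1 hornerC.
by move=> p q; rewrite /ext rmorphM hornerM. Qed.
HB.instance Definition _ := GRing.isZmodMorphism.Build _ _ ext ext_zmod.
HB.instance Definition _ := GRing.isMonoidMorphism.Build _ _ ext ext_monoid.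
Lemma ext_C b : ext (b%:P) = f b.
Proof. by rewrite /ext map_polyC hornerC. Qed.
Lemma ext_X : ext 'X = 'X * w%:P.
Proof. by rewrite /ext map_polyX hornerX. Qed.
Lemma ext_1 p : (ext p).[1] = (map_poly (horner_eval 1 \o f) p).[w].
Proof.
rewrite map_poly_comp.
have -> : w = horner_eval 1 ('X * w%:P) by rewrite horner_evalE hornerM hornerX hornerC mul1r.
by rewrite horner_map.
Qed.
Lemma ext_coef p n : (ext p)`_n =
  \sum_(i < size p) (if (n < i)%N then 0 else (f p`_i)`_(n - i) * w ^+ i).
Proof.
have hs : (size (map_poly f p) <= size p)%N by exact: size_poly.
rewrite /ext (horner_coef_wide _ hs) coef_sum.
apply: eq_bigr => i _; rewrite coef_map exprMn -polyC_exp mulrA.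
rewrite (mulrC _ ((w ^+ i)%:P)) mulrA.
by rewrite coefMXn coefCM mulrC.
Qed.
End S.
Arguments ext {B C}.
Section T.
Variable K : fieldType.
Local Notation A := {poly {poly K}}.
Local Notation R := (poly3 K).
Definition f0 : {rmorphism K -> {poly {poly K}}} := polyC \o polyC.
Definition scK : {rmorphism {poly K} -> {poly {poly K}}} := ext f0 'X.
Definition f1 : {rmorphism {poly K} -> {poly A}} := map_poly (@polyC {poly K}) \o scK.
Definition scA : {rmorphism A -> {poly A}} := ext f1 'X.
Definition f2 : {rmorphism A -> {poly R}} := map_poly (@polyC A) \o scA.
Definition sc : {rmorphism R -> {poly R}} := ext f2 'X.

Lemma sc_C3 c : sc (C3 c) = (C3 c)%:P.
Proof. by rewrite /sc /C3 /= ext_C /= /scA ext_C /= /scK ext_C /= !map_polyC. Qed.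
Lemma sc_PX : sc PX = 'X * PX%:P.
Proof. by rewrite /sc /PX /= ext_C /= /scA ext_C /= /scK ext_X /= !rmorphM /= !map_polyX !map_polyC. Qed.
Lemma sc_PY : sc PY = 'X * PY%:P.
Proof. by rewrite /sc /PY /= ext_C /= /scA ext_X /= !rmorphM /= !map_polyX !map_polyC. Qed.
Lemma sc_PZ : sc PZ = 'X * PZ%:P.
Proof. by rewrite /sc /PZ /= ext_X. Qed.

Lemma mapC_X (S : comNzRingType) (p : {poly S}) : (map_poly polyC p).['X] = p.
Proof.
rewrite horner_coef size_map_polyC -[RHS]coefK poly_def.
by apply: eq_bigr => i _; rewrite coef_map mul_polyC.
Qed.

Lemma mapC_1 (S : comNzRingType) (q : {poly {poly S}}) :
  (map_poly polyC q).[1] = (q.[1])%:P.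
Proof. by rewrite -horner_map /= rmorph1. Qed.

Lemma scK_1 p : (scK p).[1] = p.
Proof.
rewrite /scK ext_1 -[RHS]mapC_X; congr (_.[_]); apply: eq_map_poly => c /=.
by rewrite horner_evalE /f0 /= hornerC.
Qed.
Lemma scA_1 p : (scA p).[1] = p.
Proof.
rewrite /scA ext_1 -[RHS]mapC_X; congr (_.[_]); apply: eq_map_poly => c /=.
by rewrite horner_evalE /f1 /= mapC_1 scK_1.
Qed.
Lemma sc_1 p : (sc p).[1] = p.
Proof.
rewrite /sc ext_1 -[RHS]mapC_X; congr (_.[_]); apply: eq_map_poly => c /=.
by rewrite horner_evalE /f2 /= mapC_1 scA_1.
Qed.

Lemma sc_coef_size p n : leq (size ((sc p)`_n)) n.+1.
Proof.
rewrite /sc ext_coef; apply: (big_ind (fun q : R => size q <= n.+1)%N).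
- by rewrite size_poly0.
- by move=> x y hx hy; rewrite (leq_trans (size_polyD _ _)) // geq_max hx hy.
move=> i _; case: ltnP => hi; first by rewrite size_poly0.
rewrite /f2 /= coef_map /= /PZ.
rewrite (leq_trans (size_mul_leq _ _)) // size_polyC size_polyXn.
by case: (_ != 0); rewrite /= ?add0n ?add1n // ltnW.
Qed.

Definition homog n (u : R) := sc u = u%:P * 'X^n.
Lemma homogD n u v : homog n u -> homog n v -> homog n (u + v).
Proof. by rewrite /homog rmorphD => -> ->; rewrite polyCD mulrDl. Qed.
Lemma homogM m n u v : homog m u -> homog n v -> homog (m + n) (u * v).
Proof.
rewrite /homog rmorphM => -> ->; rewrite polyCM exprD.
by rewrite -!mulrA; congr (_ * _); rewrite mulrCA.
Qed.
Lemma homogX m n u : homog n u -> homog (n * m) (u ^+ m).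
Proof.
rewrite /homog rmorphXn => ->; rewrite exprMn polyC_exp exprM //.
Qed.
Lemma homogX1 m u : homog 1 u -> homog m (u ^+ m).
Proof. by move=> h; have := homogX m h; rewrite mul1n. Qed.
Lemma homogPX : homog 1 PX. Proof. by rewrite /homog sc_PX mulrC. Qed.
Lemma homogPY : homog 1 PY. Proof. by rewrite /homog sc_PY mulrC. Qed.
Lemma homogPZ : homog 1 PZ. Proof. by rewrite /homog sc_PZ mulrC. Qed.
Lemma homog_numj n : homog n (numj n).
Proof.
have h1 := homogPX; have h2 := homogPY; have h3 := homogPZ.
rewrite /numj.
apply: homogD; first apply: homogD; first apply: homogD.
- exact: homogX1 h1.
- exact: homogX1 h2.
- exact: homogX1 h3.
apply: homogX1; apply: homogD; last exact: h3.
by apply: homogD; [exact: h1 | exact: h2].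
Qed.
Lemma homog_den3 : homog 3 den3.
Proof.
have h1 := homogPX; have h2 := homogPY; have h3 := homogPZ.
rewrite /den3; apply: (homogM (m:=2) (n:=1)); first apply: (homogM (m:=1) (n:=1)).
- by apply: homogD; [exact: h1 | exact: h2].
- by apply: homogD; [exact: h1 | exact: h3].
- by apply: homogD; [exact: h2 | exact: h3].
Qed.
End T.
Arguments sc {K}.
Arguments homog {K}.

Ltac ssrnat_to_peano :=
  repeat match goal with
  | H : is_true (leq _ _) |- _ => move/leP in H
  | H : is_true (_ != _) |- _ => move/eqP in H
  | H : is_true (_ == _) |- _ => move/eqP in H
  | |- is_true (leq _ _) => apply/leP
  | |- is_true (_ != _) => apply/eqP
  | |- is_true (_ == _) => apply/eqP
  end;
  rewrite ?addnE ?subnE ?mulnE; unfold addn, subn, muln, addn_rec, subn_rec, muln_rec in *.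
Ltac nlia := ssrnat_to_peano; lia.

Lemma add2 (S : pzRingType) (h2 : (2%:R : S) = 0) (x : S) : x + x = 0.
Proof. by rewrite -mulr2n -mulr_natr h2 mulr0. Qed.

Lemma frob2 (S : comPzRingType) (h2 : (2%:R : S) = 0) (a b : S) n :
  (a + b) ^+ (2 ^ n) = a ^+ (2 ^ n) + b ^+ (2 ^ n).
Proof.
elim: n a b => [|n IH] a b; first by rewrite !expr1.
by rewrite expnS !exprM sqrrD mulr2n add2 // addr0 IH.
Qed.

Lemma rearr6 (S : comPzRingType) (h2 : (2%:R : S) = 0) (a b x c1 c2 c3 : S) :
  a + b + x + (c1 + c2 + (c3 + x)) = c3 + c2 + (a + b + c1).
Proof.
rewrite (addrA (c1 + c2)).
rewrite [c1 + c2 + c3 + x]addrC !addrA -[a + b + x + x]addrA add2 // addr0.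
rewrite [RHS]addrC [c3 + c2]addrC !addrA.
by rewrite -[c1 + c2 + c3 + a + b]addrA [c1 + c2 + c3 + _]addrC !addrA.
Qed.

Lemma size_CXn (S : idomainType) (c : S) n : c != 0 -> size (c%:P * 'X^n) = n.+1.
Proof. by move=> hc; rewrite mul_polyC size_scale ?size_polyXn. Qed.

Section M.
Variable K : fieldType.
Hypothesis two : (2%:R : K) = 0.
Local Notation A := {poly {poly K}}.
Local Notation R := (poly3 K).

Lemma twoR : (2%:R : R) = 0.
Proof. by rewrite -polyC_natr -polyC_natr -polyC_natr two !polyC0. Qed.
Lemma twoA : (2%:R : A) = 0.
Proof. by rewrite -polyC_natr -polyC_natr two !polyC0. Qed.

Lemma numj_small n : (n < 3)%N -> numj n = 0 :> R.
Proof.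
rewrite /numj; case: n => [|[|[|]]] // _.
- by rewrite !expr0 -addrA add2 ?twoR // addr0 add2 ?twoR.
- by rewrite !expr1 add2 ?twoR.
- have := @frob2 _ twoR (PX + PY) PZ 1; have := @frob2 _ twoR PX PY 1; rewrite !expn1 => -> ->.
  by rewrite add2 ?twoR.
Qed.

Definition cA : A := 'X%:P + 'X.
Lemma numj_d e : numj (2 ^ e + 1) =
  cA%:P * 'X^(2 ^ e) + (cA ^+ (2 ^ e))%:P * 'X
  + (('X%:P) ^+ (2 ^ e + 1) + 'X ^+ (2 ^ e + 1) + cA ^+ (2 ^ e + 1))%:P :> R.
Proof.
rewrite /numj /PX /PY /PZ.
have hc : ('X%:P)%:P + 'X%:P + 'X = cA%:P + 'X :> R by rewrite /cA polyCD.
rewrite hc addn1; generalize cA => C.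
rewrite [(C%:P + _) ^+ _]exprSr (@frob2 _ twoR) mulrDl !mulrDr -!exprSr.
rewrite (mulrC 'X^(2^e)) !polyCD !polyC_exp.
by rewrite (rearr6 twoR).
Qed.

Lemma cA_neq0 : cA != 0.
Proof.
have sX : size ('X : A) = 2%N by exact: size_polyX.
by rewrite -size_poly_eq0 /cA addrC size_addl sX // size_polyC; case: (_ != 0).
Qed.

Lemma size_N e : (0 < e)%N -> size (numj (2 ^ e + 1) : R) = (2 ^ e).+1.
Proof.
move=> he; have h2e : (2 <= 2 ^ e)%N by rewrite -{1}(expn1 2) leq_exp2l.
rewrite numj_d -addrA size_addl; first by rewrite size_CXn ?cA_neq0.
rewrite size_CXn ?cA_neq0 // size_MXaddC; case: ifP => // _.
by rewrite ltnS (leq_trans _ h2e) // ltnS size_polyC_leq1.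
Qed.

Lemma deriv_N e : (0 < e)%N -> (numj (2 ^ e + 1) : R)^`() = (cA ^+ (2 ^ e))%:P.
Proof.
move=> he; rewrite numj_d !derivD !deriv_mulC derivXn derivX derivC mulr1 addr0.
have -> : 'X^((2 ^ e).-1) *+ 2 ^ e = 0 :> R.
  by rewrite -mulr_natr natrX twoR expr0n eqn0Ngt he mulr0.
by rewrite mulr0 add0r.
Qed.

Lemma size_den3 : size (den3 : R) = 3%N.
Proof.
have e1 : PX + PY = cA%:P :> R by rewrite /cA polyCD.
have e2 : size (PX + PZ : R) = 2%N by rewrite /PX /PZ addrC size_XaddC.
have e3 : size (PY + PZ : R) = 2%N by rewrite /PY /PZ addrC size_XaddC.
have n2 : PX + PZ != 0 :> R by rewrite -size_poly_eq0 e2.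
have n3 : PY + PZ != 0 :> R by rewrite -size_poly_eq0 e3.
have n1 : PX + PY != 0 :> R by rewrite e1 polyC_eq0 cA_neq0.
have e1' : size (PX + PY : R) = 1%N by rewrite e1 size_polyC cA_neq0.
by rewrite /den3 (size_mul (mulf_neq0 n1 n2) n3) (size_mul n1 n2) e1' e2 e3.
Qed.
Lemma den3_neq0 : den3 != 0 :> R.
Proof. by rewrite -size_poly_eq0 size_den3. Qed.

Lemma numf_sum (b : {poly K}) : numf b = \sum_(i < size b) C3 b`_i * numj i :> R.
Proof.
have ev : forall t : R, eval3 b t = \sum_(i < size b) C3 b`_i * t ^+ i.
  move=> t; have hs : (size (map_poly (@C3 K) b) <= size b)%N by exact: size_poly.
  rewrite /eval3 (horner_coef_wide _ hs); apply: eq_bigr => i _.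
  by rewrite coef_map_id0 // /C3 !polyC0.
rewrite /numf !ev -!big_split /=; apply: eq_bigr => i _.
by rewrite /numj !mulrDr.
Qed.

Lemma sc_numf (b : {poly K}) : sc (numf b : R) = \poly_(i < size b) (C3 b`_i * numj i).
Proof.
rewrite numf_sum rmorph_sum poly_def; apply: eq_bigr => i _.
by rewrite rmorphM sc_C3 homog_numj mulrA -polyCM mul_polyC.
Qed.
End M.

Lemma C31 (K : fieldType) : C3 1 = 1 :> poly3 K.
Proof. by rewrite /C3 !polyC1. Qed.
Lemma C30 (K : fieldType) : C3 0 = 0 :> poly3 K.
Proof. by rewrite /C3 !polyC0. Qed.


Opaque sc.

Section Main.
Variable K : fieldType.
Hypothesis two : (2%:R : K) = 0.
Local Notation R := (poly3 K).
Variable k : nat.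
Hypothesis hk : (2 <= k)%N.
Variable b : {poly K}.
Hypothesis hbd : b`_(2 ^ k + 1) = 1.
Hypothesis hbgap : forall n, (2 ^ k.-1 + 2 <= n)%N -> n != (2 ^ k + 1)%N -> b`_n = 0.
Variables (phi phid : R) (phij : nat -> R).
Hypothesis hphi : phi * den3 = numf b.
Hypothesis hphid : phid * den3 = numj (2 ^ k + 1).
Hypothesis hphij : forall j, phij j * den3 = numj j.

Lemma ee : (2 ^ k = 2 ^ k.-1 + 2 ^ k.-1)%N.
Proof. by rewrite addnn -mul2n -expnS prednK // (leq_trans _ hk). Qed.
Lemma h2 : (2 <= 2 ^ k.-1)%N.
Proof. by rewrite -{1}(expn1 2) leq_exp2l // -subn1 leq_subRL ?(leq_trans _ hk). Qed.

Lemma phij_small n : (n < 3)%N -> phij n = 0.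
Proof.
move=> hn; apply: (mulIf (@den3_neq0 K)); rewrite hphij mul0r.
exact: numj_small.
Qed.
Lemma phij_d : phij (2 ^ k + 1) = phid.
Proof. by apply: (mulIf (@den3_neq0 K)); rewrite hphij hphid. Qed.
Lemma size_phid : size phid = (2 ^ k).-2.+1.
Proof.
have hk0 : (0 < k)%N by apply: leq_trans hk.
have := size_N two hk0; rewrite -hphid.
have hpn : phid != 0.
  by apply/eqP=> h0; move: (size_N two hk0); rewrite -hphid h0 mul0r size_poly0.
rewrite size_mul ?den3_neq0 // size_den3 => hs.
have := h2; have := ee; move: hs; rewrite -subn2 -subn1; set a := (2 ^ k.-1)%N; set E := (2 ^ k)%N; set x := size phid => hs h1 h3. nlia.
Qed.

Definition Phi := \poly_(n < (2 ^ k).-2.+1) (C3 b`_(n + 3) * phij (n + 3)).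

Lemma scphi : sc phi = Phi.
Proof.
have hX : (den3%:P * 'X^3 : {poly R}) != 0.
  by rewrite mulf_neq0 ?polyC_eq0 ?den3_neq0 // -size_poly_eq0 size_polyXn.
apply: (mulIf hX); rewrite -homog_den3 -rmorphM hphi sc_numf.
apply/polyP => n; rewrite homog_den3 mulrA coefMXn coefMC !coef_poly.
have hE := ee; have h2' := h2.
case: (ltnP n 3) => hn3.
  by rewrite numj_small // mulr0 if_same.
rewrite subnK //; case: (ltnP (n - 3) (2 ^ k).-2.+1) => hn1.
  rewrite -mulrA hphij; case: ltnP => // hnb.
  by rewrite nth_default // /C3 !polyC0 mul0r.
rewrite [RHS]mul0r.
case: (ltnP n (size b)) => [_|]; last by [].

rewrite hbgap; first by rewrite /C3 !polyC0 mul0r.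
  move: hn1 hE h2'; rewrite -subn2; set a := (2 ^ k.-1)%N; set E := (2 ^ k)%N => hn1 hE h2'.
  nlia.
move: hn1 hE h2' hn3; rewrite -subn2; set a := (2 ^ k.-1)%N; set E := (2 ^ k)%N => hn1 hE h2' hn3.
nlia.
Qed.

Lemma phid_neq0 : phid != 0.
Proof. by rewrite -size_poly_eq0 size_phid. Qed.

Lemma DE : ((2 ^ k).-2 + 3 = 2 ^ k + 1)%N.
Proof.
have hE := ee; have h2' := h2; move: hE h2'; rewrite -subn2.
set a := (2 ^ k.-1)%N; set E := (2 ^ k)%N => hE h2'; nlia.
Qed.

Lemma coefPhi_D : Phi`_(2 ^ k).-2 = phid.
Proof. by rewrite coef_poly ltnSn DE hbd phij_d C31 mul1r. Qed.

Lemma size_Phi : size Phi = (2 ^ k).-2.+1.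
Proof.
apply: size_poly_eq; rewrite -pred_Sn DE hbd phij_d C31 mul1r; exact: phid_neq0.
Qed.

Lemma coefPhi_gap n : (2 ^ k.-1 - 1 <= n)%N -> (n < (2 ^ k).-2)%N -> Phi`_n = 0.
Proof.
move=> h1 h3; rewrite coef_poly; case: ltnP => // _.
have hE := ee; have h2' := h2.
rewrite hbgap ?C30 ?mul0r //.
  move: h1 h3 hE h2'; rewrite -subn2; set a := (2 ^ k.-1)%N; set E := (2 ^ k)%N => h1 h3 hE h2'.
  nlia.
move: h1 h3 hE h2'; rewrite -subn2; set a := (2 ^ k.-1)%N; set E := (2 ^ k)%N => h1 h3 hE h2'.
nlia.
Qed.

Local Notation A := {poly {poly K}}.
Local Notation L := {fraction A}.
Definition mL (p : R) : {poly L} := map_poly (@tofrac A) p.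

Lemma tofrac_injA : injective (@tofrac A).
Proof. by move=> x y /eqP; rewrite tofrac_eq => /eqP. Qed.

Lemma size_mL p : size (mL p) = size p.
Proof. rewrite /mL size_map_inj_poly //; exact: tofrac_injA. Qed.

Lemma sqf (Ls Lt : R) : Ls * Lt = phid -> coprimep (mL Lt) (mL Ls).
Proof.
move=> hL.
have hk0 : (0 < k)%N by apply: leq_trans hk.
have Lt0 : Lt != 0.
  by apply/eqP=> h0; move: phid_neq0; rewrite -hL h0 mulr0 eqxx.
set G := gcdp (mL Lt) (mL Ls).
have hG2 : G * G %| mL (numj (2 ^ k + 1)).
  rewrite -hphid -hL /mL !rmorphM /=.
  by apply: dvdp_mulr; apply: dvdp_mul; [exact: dvdp_gcdr | exact: dvdp_gcdl].
have [H hH] := dvdpP _ _ hG2.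
have hGd : G %| (mL (numj (2 ^ k + 1)))^`().
  rewrite hH !derivM; apply: dvdp_add.
    by apply: dvdp_mull; apply: dvdp_mulr; exact: dvdpp.
  apply: dvdp_mull; apply: dvdp_add; first by apply: dvdp_mull; exact: dvdpp.
  by apply: dvdp_mulr; exact: dvdpp.
move: hGd; rewrite /mL deriv_map (deriv_N two hk0) map_polyC => hGd.
have c0 : (tofrac (cA K ^+ (2 ^ k) : A)) != 0.
  by rewrite tofrac_eq0 expf_neq0 // cA_neq0.
have := dvdp_leq _ hGd; rewrite polyC_eq0 c0 size_polyC c0 => /(_ isT) hs.
have G0 : G != 0 by rewrite gcdp_eq0 negb_and -size_poly_eq0 size_mL size_poly_eq0 Lt0.
by rewrite /coprimep -/G eqn_leq hs size_poly_gt0 G0.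
Qed.

Variable j : nat.
Hypothesis hjle : (j <= 2 ^ k.-1 + 1)%N.
Hypothesis hbj : b`_j != 0.
Hypothesis hjnz : phij j != 0.
Hypothesis hrel : relprime3 (phij j) phid.

Lemma Phi_neq0 : Phi != 0.
Proof. by rewrite -size_poly_eq0 size_Phi. Qed.

Lemma C3M (x y : K) : C3 x * C3 y = C3 (x * y) :> R.
Proof. by rewrite /C3 !polyCM. Qed.

Lemma take_lead (p : {poly R}) t : size p = t.+1 ->
  p = take_poly t p + (lead_coef p)%:P * 'X^t.
Proof.
move=> hs; have hd : drop_poly t p = (lead_coef p)%:P.
  apply/polyP => i; rewrite coef_drop_poly coefC; case: i => [|i] /=.
    by rewrite add0n lead_coefE hs.
  by rewrite nth_default // hs addSn ltnS leq_addl.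
by rewrite -{1}(poly_take_drop t p) hd.
Qed.

Lemma core (P Q : R) : phi = P * Q -> (size (sc Q) <= size (sc P))%N -> const3 Q.
Proof.
move=> hPQ hsz.
set Ps := sc P; set Qs := sc Q.
have hM : Ps * Qs = Phi by rewrite -scphi hPQ rmorphM.
have ePs : sc P = Ps by reflexivity. have eQs : sc Q = Qs by reflexivity.
clearbody Ps Qs.
have Ps0 : Ps != 0 by apply/eqP=> h; move: Phi_neq0; rewrite -hM h mul0r eqxx.
have Qs0 : Qs != 0 by apply/eqP=> h; move: Phi_neq0; rewrite -hM h mulr0 eqxx.
set s := (size Ps).-1; set t := (size Qs).-1.
have hsP : size Ps = s.+1 by rewrite prednK // size_poly_gt0.
have hsQ : size Qs = t.+1 by rewrite prednK // size_poly_gt0.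
have hst : (s + t = (2 ^ k).-2)%N.
  move: size_Phi; rewrite -hM size_mul // hsP hsQ addSn addnS /= => /eqP.
  by rewrite eqSS => /eqP.
have hts : (t <= s)%N by move: hsz; rewrite ePs eQs hsP hsQ.
set Ls := lead_coef Ps; set Lt := lead_coef Qs.
have hL : Ls * Lt = phid.
  by rewrite -lead_coefM hM lead_coefE size_Phi coefPhi_D.
have Ls_sz : (size Ls <= s.+1)%N by rewrite /Ls lead_coefE -/s -ePs; exact: sc_coef_size.
have Lt_sz : (size Lt <= t.+1)%N by rewrite /Lt lead_coefE -/t -eQs; exact: sc_coef_size.
have Ls0 : Ls != 0 by rewrite lead_coef_eq0.
have Lt0 : Lt != 0 by rewrite lead_coef_eq0.
have Lt_eq : size Lt = t.+1.
  move: size_phid; rewrite -hL size_mul // => h; move: h hst Ls_sz Lt_sz.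
  set D := (2 ^ k).-2; set x := size Ls; set y := size Lt; rewrite -subn1.
  move=> h hst' h1 h2'; nlia.
have hQd := take_lead hsQ; rewrite -/Lt in hQd.
set Q1 := take_poly t Qs in hQd.
have Q10 : Q1 = 0.
  case: (eqVneq Q1 0) => // hQ1; exfalso.
  set u := size Q1.
  have u1 : (0 < u)%N by rewrite size_poly_gt0.
  have ut : (u <= t)%N by exact: size_take_poly.
  have hPd := take_lead hsP; rewrite -/Ls in hPd.
  set P1 := take_poly s Ps in hPd.
  have P1sz : (size P1 <= s)%N by exact: size_take_poly.
  set ei := (s + u.-1)%N.
  have hphi0 : Phi`_ei = 0.
    have hE := ee; have h2' := h2.
    apply: coefPhi_gap; move: hE h2' hst hts u1 ut; rewrite /ei -subn2 -subn1;
      set a := (2 ^ k.-1)%N; set E := (2 ^ k)%N => hE h2' hst' hts' u1' ut'; nlia.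
  have e1 : Phi`_ei = (P1 * Q1)`_ei + (P1 * (Lt%:P * 'X^t))`_ei
      + ((Ls%:P * 'X^s) * Q1)`_ei + ((Ls%:P * 'X^s) * (Lt%:P * 'X^t))`_ei.
    by rewrite -hM {1}hPd {1}hQd mulrDl !mulrDr !coefD addrA.
  have c1 : (P1 * Q1)`_ei = 0.
    apply: nth_default; apply: (leq_trans (size_mul_leq _ _)).
    move: P1sz u1; rewrite /ei -/u -subn1; set x := size P1 => h1 h2'; nlia.
  have [w hw] : exists w, (P1 * (Lt%:P * 'X^t))`_ei = w * Lt.
    rewrite mulrA coefMXn coefMC; case: ifP => _; first by exists 0; rewrite mul0r.
    by eexists.
  have c3 : ((Ls%:P * 'X^s) * Q1)`_ei = Ls * Q1`_u.-1.
    by rewrite -mulrA coefCM (mulrC 'X^s) coefMXn ltnNge leq_addr /= /ei addKn.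
  have c4 : ((Ls%:P * 'X^s) * (Lt%:P * 'X^t))`_ei = 0.
    rewrite mulrACA -polyCM -exprD coefCM coefXn.
    have -> : (ei == s + t)%N = false.
      apply/negbTE; move: u1 ut; rewrite /ei -subn1 => u1' ut'; nlia.
    by rewrite mulr0.
  have hlq : Ls * Q1`_u.-1 = (- w) * Lt.
    move: hphi0; rewrite e1 c1 c4 hw c3 add0r addr0 mulNr => /eqP.
    by rewrite addrC addr_eq0 => /eqP.
  have lq0 : Q1`_u.-1 != 0 by rewrite -lead_coefE lead_coef_eq0.
  have lq_sz : leq (size Q1`_u.-1) u.
    rewrite /Q1 coef_take_poly ifT; last by move: u1 ut => u1' ut'; rewrite -subn1; nlia.
    by have := sc_coef_size Q u.-1; rewrite prednK // eQs.
  have hcop := sqf hL.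
  have hdiv : mL Lt %| mL Ls * mL Q1`_u.-1.
    by rewrite /mL -rmorphM /= hlq rmorphM /=; apply: dvdp_mull; exact: dvdpp.
  rewrite Gauss_dvdpr // in hdiv.
  have mq0 : mL Q1`_u.-1 != 0 by rewrite -size_poly_eq0 size_mL size_poly_eq0.
  have := dvdp_leq mq0 hdiv; rewrite !size_mL Lt_eq.
  by move=> h; move: (leq_trans h (leq_trans lq_sz ut)); rewrite ltnn.
have hQs : Qs = Lt%:P * 'X^t by rewrite hQd Q10 add0r.
have hQ : Q = Lt.
  by rewrite -(sc_1 Q) eQs hQs hornerCM hornerXn expr1n mulr1.
rewrite hQ; apply: hrel; last by exists Ls; rewrite hL.
have hj3 : (3 <= j)%N.
  case: (ltnP j 3) => [hj|//].
  by move: hjnz; rewrite phij_small // eqxx.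
have hc : Phi`_(j - 3) = C3 b`_j * phij j.
  rewrite coef_poly ifT ?subnK //.
  have hE := ee; have h2' := h2; move: hjle hj3 hE h2'; rewrite -subn2.
  set a := (2 ^ k.-1)%N; set E := (2 ^ k)%N => h1 h3 hE h2'; nlia.
have [w hw] : exists w, Phi`_(j - 3) = w * Lt.
  rewrite -hM hQs mulrA coefMXn coefMC; case: ifP => _; first by exists 0; rewrite mul0r.
  by eexists.
exists (C3 (b`_j)^-1 * w).
by rewrite -mulrA -hw hc mulrA C3M mulVf // C31 mul1r.
Qed.

Lemma irr : irreducible3 phi.
Proof.
split.
  case=> c hc; have := size_Phi; rewrite -scphi hc sc_C3 => hs.
  move: (size_polyC_leq1 (C3 c)); rewrite hs.
  have hE := ee; have h2' := h2; move: hE h2'; rewrite -subn2.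
  set a := (2 ^ k.-1)%N; set E := (2 ^ k)%N => hE h2' h; nlia.
move=> P Q hPQ; case: (leqP (size (sc Q)) (size (sc P))) => h.
  by right; exact: core hPQ h.
by left; apply: (core (P := Q) (Q := P)); [rewrite mulrC | exact: ltnW].
Qed.
End Main.

Unset Implicit Arguments.
Set Strict Implicit.

Theorem mainTheorem8
  (F : finFieldType) (m : nat) (hF : #|F| = (2 ^ m)%N)
  (K : closedFieldType) (iota : {rmorphism F -> K}) (hK : integralRange iota)
  (k : nat) (hk : (2 <= k)%N)
  (g : {poly F}) (hg : (size g <= 2 ^ k.-1 + 2)%N)
  (phi phid : poly3 K) (phij : nat -> poly3 K)
  (hphi : phi * den3 = numf (map_poly iota ('X ^+ (2 ^ k + 1) + g)))
  (hphid : phid * den3 = numj (2 ^ k + 1))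
  (hphij : forall j, phij j * den3 = numj j)
  (hj : exists j : nat, [/\ (j <= 2 ^ k.-1 + 1)%N, g`_j != 0,
          phij j != 0 & relprime3 (phij j) phid]) :
  irreducible3 phi.
Proof.
have two : (2%:R : K) = 0.
  have hc := card_finPcharP hF (isT : prime 2).
  by rewrite -(rmorph_nat iota) (pcharf0 hc) rmorph0.
case: hj => j [hjle hgj hjnz hrel].
have hE := ee hk; have h2' := h2 hk.
set b := map_poly iota ('X ^+ (2 ^ k + 1) + g).
have hcoef n : b`_n = iota (('X ^+ (2 ^ k + 1) + g)`_n) by rewrite coef_map.
have hgn n : (2 ^ k.-1 + 2 <= n)%N -> g`_n = 0.
  by move=> hn; rewrite nth_default // (leq_trans hg hn).
have hbd : b`_(2 ^ k + 1) = 1.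
  rewrite hcoef coefD coefXn eqxx hgn ?addr0 ?rmorph1 //.
  move: hE h2'; set a := (2 ^ k.-1)%N; set E := (2 ^ k)%N => hE h2''; nlia.
have hbgap n : (2 ^ k.-1 + 2 <= n)%N -> n != (2 ^ k + 1)%N -> b`_n = 0.
  move=> h1 h3; rewrite hcoef coefD coefXn (negbTE h3) add0r hgn //.
  exact: rmorph0.
have hbj : b`_j != 0.
  rewrite hcoef coefD coefXn.
  have -> : (j == 2 ^ k + 1)%N = false.
    apply/negbTE; move: hjle hE h2'; set a := (2 ^ k.-1)%N; set E := (2 ^ k)%N => h1 hE h2''; nlia.
  by rewrite add0r fmorph_eq0.
exact: (irr two hk hbd hbgap hphi hphid hphij hjle hbj hjnz hrel).
Qed.
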